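(* Consider algorithm TRIEST-IMPR (described in the context) run with integer parameter $M\ge 6$ on an insertion-only edge stream. Then $\tau^{(t)}=|\Delta^{(t)}|$ if $t\le M$, and $\mathbb{E}\left[\tau^{(t)}\right]=|\Delta^{(t)}|$ if $t>M$.
   Context: An insertion-only edge stream: at each time step $t=1,2,\dots$ an edge $e_t=\{u,v\}$ between two distinct vertices arrives, which is not already present; $G^{(t)}=(V^{(t)},E^{(t)})$ with $E^{(t)}=\{e_1,\dots,e_t\}$. A triangle in $G^{(t)}$ is a set of three edges $\{\{u,v\},\{v,w\},\{w,u\}\}\subseteq E^{(t)}$ with $u,v,w$ distinct; $\Delta^{(t)}$ is the set of all triangles of $G^{(t)}$. TRIEST-IMPR maintains an edge sample $\mathcal{S}$ (initially empty) and a counter $\tau$ (initially $0$). At time $t$, when $e_t=\{u,v\}$ arrives: first, $\tau$ is increased by $\eta^{(t)}\cdot|\mathcal{N}^{\mathcal{S}}_{u,v}|$, where $\eta^{(t)}=\max\{1,(t-1)(t-2)/(M(M-1))\}$ and $|\mathcal{N}^{\mathcal{S}}_{u,v}|$ is the number of vertices $c$ with both $\{c,u\}$ and $\{c,v\}$ in the current $\mathcal{S}$; then $\mathcal{S}$ is updated by reservoir sampling: if $t\le M$, $e_t$ is inserted into $\mathcal{S}$; if $t>M$, with probability $M/t$ an edge chosen uniformly at random from $\mathcal{S}$ is removed and $e_t$ is inserted, otherwise $\mathcal{S}$ is unchanged. The counter is never decreased. $\tau^{(t)}$ is the value of $\tau$ at the end of time step $t$, and is the algorithm's estimate of $|\Delta^{(t)}|$.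 *)

(* Defs.v *)
(* TRIEST-IMPR modelled as an explicit finite-support
   probability distribution (list of (weight, outcome)) over algorithm states. *)
From HB Require Import structures.
From mathcomp Require Import all_boot all_order all_algebra.
Set Implicit Arguments. Unset Strict Implicit. Unset Printing Implicit Defensive.
Import Order.TTheory GRing.Theory Num.Theory.
Local Open Scope ring_scope.

Definition dret (R : realFieldType) (A : Type) (x : A) : seq (R * A) := [:: (1, x)].

Definition dbind (R : realFieldType) (A B : Type)
  (d : seq (R * A)) (f : A -> seq (R * B)) : seq (R * B) :=
  flatten [seq [seq (pa.1 * qb.1, qb.2) | qb <- f pa.2] | pa <- d].

Definition expect (R : realFieldType) (A : Type) (d : seq (R * A)) (f : A -> R) : R :=
  \sum_(x <- d) x.1 * f x.2.

(* Edges are 2-element vertex sets; the stream is e 1, e 2, ... *)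
Definition edges_upto (V : finType) (e : nat -> {set V}) (t : nat) : {set {set V}} :=
  \bigcup_(1 <= i < t.+1) [set e i].

Definition is_triangle (V : finType) (T : {set {set V}}) : bool :=
  [exists u : V, exists v : V, exists w : V,
    [&& u != v, v != w, w != u & T == [set [set u; v]; [set v; w]; [set w; u]]]].

Definition triangles (V : finType) (e : nat -> {set V}) (t : nat) : {set {set {set V}}} :=
  [set T : {set {set V}} | (T \subset edges_upto e t) && is_triangle T].

Definition nbr_count (V : finType) (S : {set {set V}}) (uv : {set V}) : nat :=
  #|[set c : V | (c \notin uv) && [forall x in uv, [set c; x] \in S]]|.

Definition eta (R : realFieldType) (M t : nat) : R :=
  Num.max 1 (((t - 1) * (t - 2))%:R / (M * (M - 1))%:R).

Definition impr_step (R : realFieldType) (V : finType) (M : nat)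
  (e : nat -> {set V}) (t : nat) (st : {set {set V}} * R)
  : seq (R * ({set {set V}} * R)) :=
  let S := st.1 in
  let tau := st.2 + eta R M t * (nbr_count S (e t))%:R in
  if (t <= M)%N then dret R (e t |: S, tau)
  else [seq ((M%:R / t%:R) / #|S|%:R, (e t |: (S :\ f), tau)) | f <- enum S]
       ++ [:: (1 - M%:R / t%:R, (S, tau))].

Fixpoint impr_run (R : realFieldType) (V : finType) (M : nat)
  (e : nat -> {set V}) (t : nat) : seq (R * ({set {set V}} * R)) :=
  match t with
  | 0 => dret R (set0, 0)
  | t'.+1 => dbind (impr_run R M e t') (@impr_step R V M e t'.+1)
  end.

(* Main.v *)
Require Import Defs.
From HB Require Import structures.
From mathcomp Require Import all_boot all_order all_algebra.
From mathcomp Require Import ring zify.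
Set Implicit Arguments. Unset Strict Implicit. Unset Printing Implicit Defensive.
Import Order.TTheory GRing.Theory Num.Theory.
Local Open Scope ring_scope.

Lemma expect_bind (R : realFieldType) (A B : Type) (d : seq (R * A))
  (f : A -> seq (R * B)) (g : B -> R) :
  expect (dbind d f) g = expect d (fun a => expect (f a) g).
Proof.
rewrite /expect /dbind big_flatten /= big_map.
apply: eq_bigr => pa _; rewrite big_map big_distrr /=.
by apply: eq_bigr => qb _; rewrite mulrA.
Qed.

Lemma expectD (R : realFieldType) (A : Type) (d : seq (R * A)) f g :
  expect d (fun a => f a + g a) = expect d f + expect d g.
Proof. by rewrite /expect -big_split; apply: eq_bigr => x _; rewrite mulrDr. Qed.

Lemma expectZ (R : realFieldType) (A : Type) (d : seq (R * A)) c f :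
  expect d (fun a => c * f a) = c * expect d f.
Proof. by rewrite /expect big_distrr; apply: eq_bigr => x _; rewrite mulrCA. Qed.

Lemma expect_sum (R : realFieldType) (A : Type) (I : Type) (r : seq I)
  (d : seq (R * A)) F :
  expect d (fun a => \sum_(i <- r) F i a) = \sum_(i <- r) expect d (F i).
Proof.
rewrite /expect exchange_big /=; apply: eq_bigr => x _; by rewrite mulr_sumr.
Qed.

Lemma eq_expect_in (R : realFieldType) (A : eqType) (d : seq (R * A)) f g :
  (forall x, x \in d -> f x.2 = g x.2) -> expect d f = expect d g.
Proof.
move=> H; rewrite /expect big_seq_cond [RHS]big_seq_cond.
by apply: eq_bigr => x /andP[xd _]; rewrite H.
Qed.

Lemma expect0 (R : realFieldType) (A : Type) (d : seq (R * A)) :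
  expect d (fun _ => 0) = 0.
Proof. by rewrite /expect big1 // => x _; rewrite mulr0. Qed.

Lemma mem_dbind (R : realFieldType) (A B : eqType) (d : seq (R * A))
  (f : A -> seq (R * B)) x :
  x \in dbind d f -> exists2 a, a \in d & exists2 q, q \in f a.2 & x = (a.1 * q.1, q.2).
Proof.
case/flattenP=> s /mapP[a ad ->] /mapP[q qf ->].
by exists a => //; exists q.
Qed.

Definition tri3 (V : finType) (x y z : V) : {set {set V}} :=
  [set [set x; y]; [set y; z]; [set z; x]].

Lemma set2C (V : finType) (a b : V) : [set a; b] = [set b; a].
Proof. by apply/setP => z; rewrite !inE orbC. Qed.

Lemma tri3_rot (V : finType) (x y z : V) : tri3 x y z = tri3 y z x.
Proof.
apply/setP => F; rewrite !inE.
by case: (F == [set x; y]); case: (F == [set y; z]); case: (F == [set z; x]).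
Qed.

Lemma tri3_swap (V : finType) (x y z : V) : tri3 x y z = tri3 y x z.
Proof.
rewrite /tri3 (set2C y x) (set2C x z) (set2C z y).
apply/setP => F; rewrite !inE.
by case: (F == [set x; y]); case: (F == [set y; z]); case: (F == [set z; x]).
Qed.

Lemma set2_eq (V : finType) (u v x y : V) : u != v -> [set u; v] = [set x; y] ->
  (u = x /\ v = y) \/ (u = y /\ v = x).
Proof.
move=> uv E.
have: u \in [set x; y] by rewrite -E set21.
have: v \in [set x; y] by rewrite -E set22.
rewrite !inE => /orP[]/eqP vE /orP[]/eqP uE; subst; rewrite ?eqxx in uv; auto; by [].
Qed.

Lemma tri_uv (V : finType) (u v x y z : V) : u != v -> x != y -> y != z -> z != x ->
  [set u; v] = [set x; y] -> exists2 c, c \notin [set u; v] & tri3 x y z = tri3 u v c.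
Proof.
move=> uv xy yz zx E; exists z; first by rewrite E !inE negb_or zx eq_sym yz.
case: (set2_eq uv E) => [[-> ->]|[-> ->]] //; exact: tri3_swap.
Qed.

Definition triset (V : finType) (E : {set {set V}}) : {set {set {set V}}} :=
  [set T : {set {set V}} | (T \subset E) && is_triangle T].

Lemma is_triangleP (V : finType) (T : {set {set V}}) :
  reflect (exists x, exists y, exists z, [/\ x != y, y != z, z != x & T = tri3 x y z])
          (is_triangle T).
Proof.
apply: (iffP existsP) => [[x /existsP[y /existsP[z /and4P[h1 h2 h3 /eqP h4]]]]|[x [y [z [h1 h2 h3 h4]]]]].
  by exists x, y, z.
by exists x; apply/existsP; exists y; apply/existsP; exists z; rewrite h1 h2 h3 h4 eqxx.
Qed.

Lemma triset_add (V : finType) (E : {set {set V}}) (u v : V) :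
  u != v -> [set u; v] \notin E ->
  #|triset ([set u; v] |: E)| = (#|triset E| + nbr_count E [set u; v])%N.
Proof.
move=> uv nE.
set A := triset _.
rewrite -(cardsID [set T : {set {set V}} | [set u; v] \in T] A) addnC.
have ->: A :\: [set T : {set {set V}} | [set u; v] \in T] = triset E.
  apply/setP=> T; rewrite !inE.
  case: (is_triangle T); rewrite ?andbF ?andbT //.
  apply/andP/idP => [[nT sT]| sT].
    apply/subsetP => F FT; have := subsetP sT F FT; rewrite !inE => /orP[/eqP FE|//].
    by move: FT; rewrite FE (negbTE nT).
  split; last exact: subset_trans sT (subsetU1 _ _).
  by apply: contra nE => uT; exact: subsetP sT _ uT.
congr addn.
rewrite /nbr_count; set N := [set c : V | _].
have ->: A :&: [set T : {set {set V}} | [set u; v] \in T] = (fun c => tri3 u v c) @: N.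
  apply/setP => T; rewrite !inE; apply/idP/imsetP.
    case/andP=> /andP[sT /is_triangleP[x [y [z [xy yz zx hT]]]]] uT; subst T.
    have [c cuv Tc] : exists2 c, c \notin [set u; v] & tri3 x y z = tri3 u v c.
      move: uT; rewrite !inE => /orP[/orP[]|]/eqP uE.
      - exact: tri_uv.
      - by rewrite tri3_rot; apply: tri_uv.
      - by rewrite tri3_rot tri3_rot; apply: tri_uv.
    exists c => //.
    move: cuv; rewrite !inE negb_or => /andP[cu cv].
    rewrite cu cv /=.
    have inE' : forall F, F \in tri3 u v c -> F != [set u; v] -> F \in E.
      move=> F FT Fne; have := subsetP sT F; rewrite Tc => /(_ FT).
      by rewrite !inE (negbTE Fne).
    have h1 : [set v; c] \in E.
      apply: inE'; first by rewrite !inE eqxx orbT.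
      apply/eqP => h; have : c \in [set u; v] by rewrite -h set22.
      by rewrite !inE (negbTE cu) (negbTE cv).
    have h2 : [set c; u] \in E.
      apply: inE'; first by rewrite !inE eqxx !orbT.
      apply/eqP => h; have : c \in [set u; v] by rewrite -h set21.
      by rewrite !inE (negbTE cu) (negbTE cv).
    apply/forall_inP => w; rewrite !inE => /orP[]/eqP-> //.
    by rewrite set2C.
  case=> c; rewrite inE => /andP[cuv /forall_inP hc] ->.
  move: cuv; rewrite !inE negb_or => /andP[cu cv].
  have h1 : [set c; u] \in E by apply: hc; rewrite !inE eqxx.
  have h2 : [set v; c] \in E by rewrite set2C; apply: hc; rewrite !inE eqxx orbT.
  rewrite eqxx !orTb andbT; apply/andP; split.
    apply/subsetP => F; rewrite !inE => /orP[/orP[]|]/eqP->; rewrite ?eqxx //.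
      by rewrite ?h1 ?h2 orbT.
    by rewrite ?h1 ?h2 orbT.
  by apply/is_triangleP; exists u, v, c; rewrite uv eq_sym cv cu.
rewrite card_in_imset // => c c'; rewrite !inE => /andP[cuv _] /andP[c'uv _] E'.
move: cuv c'uv; rewrite !negb_or => /andP[cu cv] /andP[c'u c'v].
have: [set v; c] \in tri3 u v c' by rewrite -E' !inE eqxx orbT.
have hc : c \in [set v; c] by rewrite set22.
rewrite !inE => /orP[/orP[]|]/eqP h; rewrite h !inE in hc.
- by move: hc; rewrite (negbTE cu) (negbTE cv).
- by move: hc; rewrite (negbTE cv) => /eqP.
- by move: hc; rewrite (negbTE cu) orbF => /eqP.
Qed.

Lemma edges_upto0 (V : finType) (e : nat -> {set V}) : edges_upto e 0 = set0.
Proof. by rewrite /edges_upto big_geq. Qed.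

Lemma edges_uptoS (V : finType) (e : nat -> {set V}) t :
  edges_upto e t.+1 = e t.+1 |: edges_upto e t.
Proof. by rewrite /edges_upto big_nat_recr //= setUC. Qed.

Definition Hyp (V : finType) (e : nat -> {set V}) t :=
  forall i : nat, (1 <= i <= t)%N -> #|e i| = 2%N /\ e i \notin edges_upto e i.-1.

Lemma Hyp_pred (V : finType) (e : nat -> {set V}) t : Hyp e t.+1 -> Hyp e t.
Proof. move=> H i /andP[h1 h2]; apply: H; rewrite h1 /=; exact: leqW. Qed.

Lemma card_edges (V : finType) (e : nat -> {set V}) t : Hyp e t -> #|edges_upto e t| = t.
Proof.
elim: t => [|t IH] H; first by rewrite edges_upto0 cards0.
rewrite edges_uptoS cardsU1 IH; last exact: Hyp_pred.
by have [_ ->] := H t.+1 (leqnn _).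
Qed.

Lemma triset0 (V : finType) : triset (set0 : {set {set V}}) = set0.
Proof.
apply/setP => T; rewrite !inE subset0.
apply/negP => /andP[/eqP -> /is_triangleP[x [y [z [_ _ _ h]]]]].
have : [set x; y] \in tri3 x y z by rewrite !inE eqxx.
by rewrite -h inE.
Qed.

Lemma eta_small (R : realFieldType) (M t : nat) : (1 < M)%N -> (t <= M)%N -> Defs.eta R M t = 1.
Proof.
move=> M0 tM; rewrite /Defs.eta max_l // ler_pdivrMr ?mul1r ?ler_nat.
  by apply: leq_mul; lia.
rewrite ltr0n muln_gt0; apply/andP; split; lia.
Qed.

Lemma edge2 (V : finType) (E : {set V}) : #|E| = 2%N -> exists u v, u != v /\ E = [set u; v].
Proof. by move/eqP/cards2P => [u [v [uv ->]]]; exists u, v. Qed.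

Lemma tri_step (V : finType) (e : nat -> {set V}) s : Hyp e s.+1 ->
  #|triangles e s.+1| = (#|triangles e s| + nbr_count (edges_upto e s) (e s.+1))%N.
Proof.
move=> H; have [h2 hn] := H s.+1 (leqnn _).
have [u [v [uv he]]] := edge2 h2.
rewrite /triangles -/(triset _) -/(triset _) edges_uptoS he triset_add //.
by rewrite -he.
Qed.

Definition Inv (R : realFieldType) (V : finType) (M : nat) (e : nat -> {set V}) t
  (st : {set {set V}} * R) :=
  ((t <= M)%N -> st.1 = edges_upto e t /\ st.2 = (#|triangles e t|)%:R) /\
  ((M <= t)%N -> st.1 \subset edges_upto e t /\ #|st.1| = M).

Lemma inv_run (R : realFieldType) (V : finType) (M : nat) (e : nat -> {set V}) t :
  (1 < M)%N -> Hyp e t -> forall x, x \in impr_run R M e t -> Inv M e t x.2.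
Proof.
move=> M1; elim: t => [|s IH] H x.
  rewrite inE => /eqP -> /=; split => [_|]; last by lia.
  by rewrite edges_upto0 /triangles -/(triset _) edges_upto0 triset0 cards0.
case/mem_dbind => a ad [q qs ->] /=.
have [IH1 IH2] := IH (Hyp_pred H) a ad.
have [h2 hn] := H s.+1 (leqnn _).
move: qs; rewrite /impr_step; case: ifP => sM.
  rewrite /dret inE => /eqP -> /=.
  have [-> ->] := IH1 (ltnW sM).
  rewrite eta_small // mul1r -natrD -tri_step // -edges_uptoS.
  split=> // Ms; split => //.
  by rewrite card_edges //; apply/eqP; rewrite eqn_leq sM Ms.
have sM' : (M <= s)%N by rewrite leqNgt sM.
have [sS cS] := IH2 sM'.
have etS : e s.+1 \notin a.2.1.
  by apply: contra hn => h; exact: subsetP sS _ h.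
move=> qin; split=> [h|_]; first by rewrite h in sM.
move: qin.
rewrite mem_cat => /orP[/mapP[f fS ->]|]; last first.
  rewrite inE => /eqP -> /=; split => //.
  by rewrite edges_uptoS; apply: subset_trans sS (subsetU1 _ _).
rewrite /= edges_uptoS; split.
  by apply: setUS; apply: subset_trans sS; exact: subsetDl.
rewrite cardsU1 inE negb_and etS orbT /=.
move: fS; rewrite mem_enum => fS.
have := cardsD1 f a.2.1; rewrite fS cS /=; lia.
Qed.

Lemma sum_notin (R : realFieldType) (T : finType) (S B : {set T}) :
  \sum_(f <- enum S) ((f \notin B)%:R : R) = #|S :\: B|%:R.
Proof.
rewrite big_enum /= -natr_sum; congr (_%:R).
rewrite -sum1_card (big_setID B) /= [X in (X + _)%N]big1 ?add0n.
  by apply: eq_bigr => i; rewrite !inE => /andP[-> _].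
by move=> i; rewrite !inE => /andP[_ ->].
Qed.

Lemma step_big (R : realFieldType) (V : finType) (M : nat) (e : nat -> {set V}) t
  (st : {set {set V}} * R) g : ~~ (t <= M)%N ->
  expect (impr_step M e t st) g =
  \sum_(f <- enum st.1) ((M%:R / t%:R / #|st.1|%:R) *
       g (e t |: st.1 :\ f, st.2 + Defs.eta R M t * (nbr_count st.1 (e t))%:R))
  + (1 - M%:R / t%:R) * g (st.1, st.2 + Defs.eta R M t * (nbr_count st.1 (e t))%:R).
Proof.
by move=> tM; rewrite /impr_step (negbTE tM) /expect big_cat big_map big_seq1.
Qed.

Lemma step_tau (R : realFieldType) (V : finType) (M : nat) (e : nat -> {set V}) t
  (st : {set {set V}} * R) q : q \in impr_step M e t st ->
  q.2.2 = st.2 + Defs.eta R M t * (nbr_count st.1 (e t))%:R.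
Proof.
rewrite /impr_step; case: ifP => _; first by rewrite /dret inE => /eqP ->.
by rewrite mem_cat => /orP[/mapP[f _ ->]|]; rewrite ?inE => // /eqP ->.
Qed.

Lemma step_mass (R : realFieldType) (V : finType) (M : nat) (e : nat -> {set V}) t
  (st : {set {set V}} * R) : (0 < M)%N -> ((t <= M)%N \/ #|st.1| = M) ->
  expect (impr_step M e t st) (fun _ => 1) = 1.
Proof.
move=> M0 h; case: (boolP (t <= M)%N) => tM.
  by rewrite /impr_step tM /expect big_seq1 !mul1r.
rewrite step_big //.
case: h => [h|cS]; first by rewrite h in tM.
rewrite big_enum /= sumr_const cS.
have t0 : t%:R != 0 :> R by rewrite pnatr_eq0; lia.
have m0 : M%:R != 0 :> R by rewrite pnatr_eq0; lia.
rewrite -mulr_natr !mulr1; field.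
by rewrite t0 m0.
Qed.

Lemma mass_run (R : realFieldType) (V : finType) (M : nat) (e : nat -> {set V}) t :
  (1 < M)%N -> Hyp e t -> expect (impr_run R M e t) (fun _ => 1) = 1.
Proof.
move=> M1; elim: t => [|s IH] H; first by rewrite /= /expect big_seq1 mulr1.
rewrite /= expect_bind -[RHS](IH (Hyp_pred H)).
apply: eq_expect_in => a ad; apply: step_mass; first lia.
have [I1 I2] := inv_run M1 (Hyp_pred H) ad.
case: (leqP s.+1 M) => sM; [left | right] => //.
by case: (I2 _).
Qed.

Definition ff (R : realFieldType) (n k : nat) : R := \prod_(i < k) (n%:R - i%:R).

Lemma ffS (R : realFieldType) n k : ff R n k.+1 = ff R n k * (n%:R - k%:R).
Proof. by rewrite /ff big_ord_recr. Qed.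

Lemma ff_shift (R : realFieldType) n k : ff R n.+1 k.+1 = n.+1%:R * ff R n k.
Proof.
elim: k => [|k IH]; first by rewrite ffS /ff !big_ord0 subr0; ring.
rewrite ffS IH ffS -[n.+1]addn1 -[k.+1]addn1 !natrD; ring.
Qed.

Lemma ff_shift2 (R : realFieldType) n k :
  ff R n.+1 k * (n.+1%:R - k%:R) = n.+1%:R * ff R n k.
Proof.
elim: k => [|k IH]; first by rewrite /ff !big_ord0 subr0; ring.
rewrite ffS -mulrA.
have -> : (n.+1%:R - k.+1%:R : R) = n%:R - k%:R.
  by rewrite -[n.+1]addn1 -[k.+1]addn1 !natrD; ring.
by rewrite mulrA IH ffS mulrA.
Qed.

Lemma ff_neq0 (R : realFieldType) n k : (k <= n)%N -> ff R n k != 0.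
Proof.
move=> kn; apply/prodf_neq0 => i _; rewrite subr_eq0 eqr_nat.
have := ltn_ord i; lia.
Qed.

Lemma subU1_notin (T : finType) (x : T) (B C : {set T}) :
  x \notin B -> (B \subset x |: C) = (B \subset C).
Proof.
move=> xB; apply/idP/idP => h; last exact: subset_trans h (subsetU1 _ _).
apply/subsetP => y yB; have := subsetP h y yB; rewrite !inE => /orP[/eqP yx|//].
by move: xB; rewrite -yx yB.
Qed.

Lemma subU1_in (T : finType) (x : T) (B C : {set T}) :
  x \in B -> (B \subset x |: C) = (B :\ x \subset C).
Proof.
move=> xB; apply/idP/idP => h.
  apply/subsetP => y; rewrite inE => /andP[yx yB].
  by have := subsetP h y yB; rewrite inE (negbTE yx).
apply/subsetP => y yB; rewrite !inE; case: (boolP (y == x)) => /= yx //.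
by apply: (subsetP h); rewrite !inE yx yB.
Qed.

Lemma inner1 (R : realFieldType) (V : finType) (M : nat) (e : nat -> {set V}) t
  (st : {set {set V}} * R) (B : {set {set V}}) : (0 < M)%N -> ~~ (t <= M)%N -> #|st.1| = M ->
  e t \notin B ->
  expect (impr_step M e t st) (fun x : {set {set V}} * R => (B \subset x.1)%:R) =
  (t%:R - #|B|%:R) / t%:R * (B \subset st.1)%:R.
Proof.
move=> M0 tM cS etB; rewrite step_big //=.
under eq_bigr do rewrite subU1_notin // subsetD1.
have t0 : t%:R != 0 :> R by rewrite pnatr_eq0; lia.
have m0 : M%:R != 0 :> R by rewrite pnatr_eq0; lia.
case: (boolP (B \subset st.1)) => BS /=; last first.
  by rewrite big1 ?add0r ?mulr0.
rewrite -mulr_sumr sum_notin cardsD (setIidPr BS) natrB ?subset_leq_card // cS.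
rewrite mulr1; field; by rewrite t0 m0.
Qed.

Lemma inner2 (R : realFieldType) (V : finType) (M : nat) (e : nat -> {set V}) t
  (st : {set {set V}} * R) (B : {set {set V}}) : (0 < M)%N -> ~~ (t <= M)%N -> #|st.1| = M ->
  e t \in B -> e t \notin st.1 ->
  expect (impr_step M e t st) (fun x : {set {set V}} * R => (B \subset x.1)%:R) =
  (M%:R - #|B :\ e t|%:R) / t%:R * (B :\ e t \subset st.1)%:R.
Proof.
move=> M0 tM cS etB etS; rewrite step_big //=.
under eq_bigr do rewrite subU1_in // subsetD1.
have -> : (B \subset st.1) = false.
  by apply/negP => h; move: etS; rewrite (subsetP h _ etB).
have t0 : t%:R != 0 :> R by rewrite pnatr_eq0; lia.
have m0 : M%:R != 0 :> R by rewrite pnatr_eq0; lia.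
case: (boolP (B :\ e t \subset st.1)) => BS /=; last first.
  by rewrite big1 ?add0r ?mulr0.
rewrite -mulr_sumr sum_notin cardsD (setIidPr BS) natrB ?subset_leq_card // cS.
rewrite !mulr1 mulr0 addr0; field; by rewrite t0 m0.
Qed.

Lemma prob_run (R : realFieldType) (V : finType) (M : nat) (e : nat -> {set V}) s :
  (1 < M)%N -> Hyp e s -> (M <= s)%N -> forall B : {set {set V}}, B \subset edges_upto e s ->
  expect (impr_run R M e s) (fun x : {set {set V}} * R => (B \subset x.1)%:R)
  = ff R M #|B| / ff R s #|B|.
Proof.
move=> M1; elim: s => [|s IH] H Ms B BE; first by lia.
have kle : (#|B| <= s.+1)%N by rewrite -(card_edges H) subset_leq_card.
case: (leqP M s) => sM; last first.
  have sM' : s.+1 = M by lia.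
  have -> : ff R M #|B| / ff R s.+1 #|B| = 1 by rewrite -sM' divff // ff_neq0.
  transitivity (expect (impr_run R M e s.+1) (fun _ => 1)); last exact: mass_run.
  apply: eq_expect_in => x xd.
  have [I1 _] := inv_run M1 H xd; have [-> _] := I1 (eq_leq sM' : (s.+1 <= M)%N).
  by rewrite BE.
have [h2 hn] := H s.+1 (leqnn _).
have t0 : s.+1%:R != 0 :> R by rewrite pnatr_eq0.
rewrite /= expect_bind.
case: (boolP (e s.+1 \in B)) => etB.
  set B' := B :\ e s.+1.
  have B'E : B' \subset edges_upto e s by rewrite -subU1_in // -edges_uptoS.
  have kB : #|B| = #|B'|.+1 by rewrite (cardsD1 (e s.+1) B) etB.
  have k'le : (#|B'| <= s)%N by lia.
  transitivity (expect (impr_run R M e s)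
      (fun x => (M%:R - #|B'|%:R) / s.+1%:R * (B' \subset x.1)%:R)).
    apply: eq_expect_in => x xd.
    have [_ /(_ sM) [sS cS]] := inv_run M1 (Hyp_pred H) xd.
    apply: inner2 => //; try lia; try by rewrite -leqNgt.
    by apply: contra hn => h; exact: subsetP sS _ h.
  rewrite expectZ IH //; last exact: Hyp_pred.
  rewrite kB ffS ff_shift; field.
  by rewrite ff_neq0 //= addrC natr1 pnatr_eq0.
have BE' : B \subset edges_upto e s by rewrite -(subU1_notin _ etB) -edges_uptoS.
have kle' : (#|B| <= s)%N by rewrite -(card_edges (Hyp_pred H)) subset_leq_card.
transitivity (expect (impr_run R M e s)
    (fun x => (s.+1%:R - #|B|%:R) / s.+1%:R * (B \subset x.1)%:R)).
  apply: eq_expect_in => x xd.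
  have [_ /(_ sM) [sS cS]] := inv_run M1 (Hyp_pred H) xd.
  apply: inner1 => //; lia.
rewrite expectZ IH //; last exact: Hyp_pred.
have tk : s.+1%:R - #|B|%:R != 0 :> R by rewrite subr_eq0 eqr_nat; lia.
have hH : ff R s.+1 #|B| = s.+1%:R * ff R s #|B| / (s.+1%:R - #|B|%:R).
  by rewrite -ff_shift2 mulfK.
rewrite hH; field.
have e1 : 1 + s%:R = s.+1%:R :> R by rewrite addrC natr1.
by rewrite !e1 tk ff_neq0 // pnatr_eq0.
Qed.

Lemma nbr_sum (R : realFieldType) (V : finType) (S : {set {set V}}) (u v : V) :
  (nbr_count S [set u; v])%:R = \sum_(c : V)
     ((c \notin [set u; v]) && ([set [set c; u]; [set c; v]] \subset S))%:R :> R.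
Proof.
rewrite /nbr_count -sum1_card natr_sum big_mkcond /=; apply: eq_bigr => c _.
rewrite inE.
have -> : [forall x in [set u; v], [set c; x] \in S] =
          ([set [set c; u]; [set c; v]] \subset S).
  rewrite subUset !sub1set; apply/forall_inP/andP => [h|[h1 h2] x].
    by split; apply: h; rewrite !inE eqxx ?orbT.
  by rewrite !inE => /orP[]/eqP->.
by case: (_ && _).
Qed.

Lemma ff2 (R : realFieldType) n : (0 < n)%N -> ff R n 2 = (n * (n - 1))%:R.
Proof.
move=> n0; rewrite !ffS /ff big_ord0 mul1r subr0 natrM natrB //.
Qed.

Lemma exp_nbr (R : realFieldType) (V : finType) (M : nat) (e : nat -> {set V}) s :
  (1 < M)%N -> Hyp e s.+1 -> (M <= s)%N ->
  expect (impr_run R M e s) (fun x : {set {set V}} * R => (nbr_count x.1 (e s.+1))%:R)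
  = ff R M 2 / ff R s 2 * (nbr_count (edges_upto e s) (e s.+1))%:R.
Proof.
move=> M1 H Ms.
have [h2 hn] := H s.+1 (leqnn _).
have [u [v [uv he]]] := edge2 h2.
rewrite he nbr_sum.
transitivity (expect (impr_run R M e s) (fun x : {set {set V}} * R =>
   \sum_(c : V) ((c \notin [set u; v]) && ([set [set c; u]; [set c; v]] \subset x.1))%:R)).
  by apply: eq_expect_in => x _; rewrite nbr_sum.
rewrite expect_sum mulr_sumr; apply: eq_bigr => c _.
case: (boolP (c \in [set u; v])) => cuv /=.
  by rewrite mulr0 -(expect0 (impr_run R M e s)).
have Hs := Hyp_pred H.
have ->: (fun x : {set {set V}} * R => (([set [set c; u]; [set c; v]] \subset x.1) : bool)%:R)
   = (fun x : {set {set V}} * R => (([set [set c; u]; [set c; v]] \subset x.1) : bool)%:R) by [].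
case: (boolP ([set [set c; u]; [set c; v]] \subset edges_upto e s)) => BE.
  rewrite (prob_run R M1 Hs Ms BE) mulr1 cards2.
  suff -> : [set c; u] != [set c; v] by [].
  apply/eqP => h; have : v \in [set c; v] by rewrite set22.
  rewrite -h !inE => /orP[]/eqP vE.
    by move: cuv; rewrite !inE -vE eqxx orbT.
  by move: uv; rewrite vE eqxx.
rewrite mulr0 -(expect0 (impr_run R M e s)); apply: eq_expect_in => x xd.
have [_ /(_ Ms) [sS _]] := inv_run M1 Hs xd.
case: (boolP ([set [set c; u]; [set c; v]] \subset x.2.1)) => // h.
by move: BE; rewrite (subset_trans h sS).
Qed.

Lemma eta_big (R : realFieldType) (M s : nat) : (1 < M)%N -> (M <= s)%N ->
  Defs.eta R M s.+1 * (ff R M 2 / ff R s 2) = 1.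
Proof.
move=> M1 Ms.
have hM : (M * (M - 1))%:R != 0 :> R by rewrite pnatr_eq0 muln_eq0; lia.
have hs : (s * (s - 1))%:R != 0 :> R by rewrite pnatr_eq0 muln_eq0; lia.
rewrite /Defs.eta !subSS subn0 max_r; last first.
  rewrite ler_pdivlMr ?mul1r ?ler_nat ?ltr0n ?lt0n //.
  by apply: leq_mul; lia.
  by rewrite muln_eq0; lia.
rewrite !ff2; try lia.
field.
by rewrite !pnatr_eq0; apply/and4P; split; lia.
Qed.

Lemma exp_tau (R : realFieldType) (V : finType) (M : nat) (e : nat -> {set V}) t :
  (1 < M)%N -> Hyp e t -> (M <= t)%N ->
  expect (impr_run R M e t) (fun x => x.2) = (#|triangles e t|)%:R.
Proof.
move=> M1; elim: t => [|s IH] H Ms; first by lia.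
have Hs := Hyp_pred H.
case: (leqP M s) => sM; last first.
  transitivity (expect (impr_run R M e s.+1) (fun _ => (#|triangles e s.+1|)%:R * 1)).
    apply: eq_expect_in => x xd.
    have [I1 _] := inv_run M1 H xd; have [_ ->] := I1 sM.
    by rewrite mulr1.
  by rewrite expectZ mass_run ?mulr1.
rewrite /= expect_bind.
transitivity (expect (impr_run R M e s) (fun a => a.2 +
   Defs.eta R M s.+1 * (nbr_count a.1 (e s.+1))%:R)).
  apply: eq_expect_in => a ad.
  have [_ /(_ sM) [_ cS]] := inv_run M1 Hs ad.
  transitivity (expect (impr_step M e s.+1 a.2) (fun _ =>
       (a.2.2 + Defs.eta R M s.+1 * (nbr_count a.2.1 (e s.+1))%:R) * 1)).
    by apply: eq_expect_in => q qd; rewrite (step_tau qd) mulr1.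
  by rewrite expectZ step_mass ?mulr1; [|lia|right].
rewrite expectD expectZ IH // (exp_nbr R M1 H sM) mulrA eta_big // mul1r.
by rewrite tri_step // natrD.
Qed.

Unset Implicit Arguments.
Theorem theorem4p12 (R : realFieldType) (V : finType) (M : nat)
  (e : nat -> {set V}) (t : nat) :
  (6 <= M)%N ->
  (forall i : nat, (1 <= i <= t)%N ->
     #|e i| = 2%N /\ e i \notin edges_upto e i.-1) ->
  ((t <= M)%N ->
     forall x, x \in impr_run R M e t -> x.2.2 = (#|triangles e t|)%:R)
  /\
  ((M < t)%N ->
     expect (impr_run R M e t) (fun st => st.2) = (#|triangles e t|)%:R).
Proof.
move=> M6 H.
have M1 : (1 < M)%N by lia.
split.
  move=> tM x xd; have [I1 _] := inv_run M1 H xd.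
  by have [_ ->] := I1 tM.
by move=> tM; apply: exp_tau => //; exact: ltnW.
Qed.
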